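(* Let $\rho\in\mathrm{Irr}(W)$. If there exists $\eta\in\mathrm X(\rho)$ with $\rho^*\otimes\epsilon\simeq\rho\otimes\eta$, then such $\eta$ is unique. The corresponding embedding $\epsilon\otimes\eta\hookrightarrow\rho^*\otimes\rho^*$ defines, up to a scalar, a nondegenerate bilinear form $\langle\,,\rangle$ on $V_\rho$ satisfying $\langle\rho(w)x,\rho(w)y\rangle=\epsilon(w)\eta(w)\langle x,y\rangle$; letting $\mathfrak{osp}(V_\rho)\subset\mathfrak{sl}(V_\rho)$ be the Lie subalgebra of endomorphisms $u$ with $\langle ux,y\rangle+\langle x,uy\rangle=0$, one has $\rho(\mathcal H')\subset\mathfrak{osp}(V_\rho)$. If moreover the form is symmetric and $\dim\rho>1$, then it is hyperbolic (i.e. $V_\rho$ is an orthogonal direct sum of hyperbolic planes).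
   Context: $W\subset\mathrm{GL}(V)$ is a finite group generated by reflections (elements of order 2 fixing a hyperplane) of a finite-dimensional complex vector space $V$; $\mathcal R$ is its set of reflections, $\epsilon=\det:W\to\{\pm1\}$ its sign character. $\mathbf k$ is a characteristic-0 field over which all irreducible representations of $W$ are defined and absolutely irreducible. $\mathcal H$ is the Lie subalgebra of $\mathbf kW$ (bracket $xy-yx$) generated by $\mathcal R$, $\mathcal H'$ its derived algebra. For $\rho\in\mathrm{Irr}(W)$ acting on $V_\rho$: $\mathrm X(\rho)=\{\eta\in\mathrm{Hom}(W,\{\pm1\}):\forall s\in\mathcal R,\ \eta(s)=-1\Rightarrow\rho(s)=\pm\mathrm{Id}\}$. *)

(* Defs.v *)
From HB Require Import structures.
From mathcomp Require Import all_boot all_order all_algebra all_fingroup all_solvable all_field all_character.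
Set Implicit Arguments. Unset Strict Implicit. Unset Printing Implicit Defensive.
Import Order.TTheory GRing.Theory Num.Theory.
Local Open Scope ring_scope.

Section Defs.
Variable gT : finGroupType.
Variable W : {group gT}.

(* Reflection representation: W acts on V = algC^n (right action on row
   vectors, MathComp convention). *)
Variable n : nat.
Variable rV : mx_representation algC W n.

Definition is_reflection (s : gT) : bool :=
  [&& s \in W, #[s]%g == 2%N & \rank (rV s - 1%:M) == 1%N].

Definition reflections : {set gT} := [set s | is_reflection s].

Definition is_reflection_group : Prop :=
  mx_faithful rV /\ (W :=: <<reflections>>)%g.

Variable F : fieldType.

Definition sgn_char (w : gT) : F := if \det (rV w) == 1 then 1 else -1.

Definition is_sign_hom (eta : gT -> F) : Prop :=
  {in W &, forall x y, eta (x * y)%g = eta x * eta y} /\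
  {in W, forall x, eta x = 1 \/ eta x = -1}.

Variable d : nat.
Variable rho : mx_representation F W d.

Definition in_X (eta : gT -> F) : Prop :=
  is_sign_hom eta /\
  forall s, s \in reflections -> eta s = -1 ->
    rho s = 1%:M \/ rho s = - 1%:M.

(* rho^* (x) epsilon  ~=  rho (x) eta, where rho^*(w) = rho(w^-1)^T,
   written out as the existence of an invertible intertwiner. *)
Definition dual_twist_iso (eta : gT -> F) : Prop :=
  exists P : 'M[F]_d, P \in unitmx /\
    {in W, forall w, (sgn_char w *: (rho (w^-1)%g)^T) *m P
                     = P *m (eta w *: rho w)}.

(* Bilinear form <x,y> = x *m B *m y^T on row vectors, invariant with
   character eps*eta:  <x rho(w), y rho(w)> = eps(w) eta(w) <x,y>. *)
Definition invariant_form (eta : gT -> F) (B : 'M[F]_d) : Prop :=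
  {in W, forall w, rho w *m B *m (rho w)^T = (sgn_char w * eta w) *: B}.

Definition in_osp (B : 'M[F]_d) (u : 'M[F]_d) : Prop :=
  \tr u = 0 /\ u *m B + B *m u^T = 0.

(* Hyperbolic form: V is an orthogonal direct sum of m hyperbolic planes
   span(e_i, f_i), i.e. there is a basis e_1..e_m, f_1..f_m (the rows of P)
   with <e_i,e_j> = <f_i,f_j> = 0 and <e_i,f_j> = <f_j,e_i> = delta_ij. *)
Definition hyperbolic (B : 'M[F]_d) : Prop :=
  exists m : nat, d = (m + m)%N /\
    exists P : 'M[F]_d, P \in unitmx /\
      P *m B *m P^T =
        \matrix_(i, j) ((((i : nat) + m == j)%N || ((j : nat) + m == i)%N)%:R : F).

(* The group algebra kW: elements are functions gT -> F (supported on W). *)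
Definition kW := {ffun gT -> F}.

Definition kW_mul (a b : kW) : kW :=
  [ffun g => \sum_(x in W) a x * b (x^-1 * g)%g].

Definition kW_br (a b : kW) : kW :=
  [ffun g => kW_mul a b g - kW_mul b a g].

Definition kW_of (s : gT) : kW := [ffun g => (g == s)%:R].

Inductive in_H : kW -> Prop :=
| H_gen s : s \in reflections -> in_H (kW_of s)
| H_zero : in_H [ffun => 0]
| H_add a b : in_H a -> in_H b -> in_H [ffun g => a g + b g]
| H_scale (c : F) a : in_H a -> in_H [ffun g => c * a g]
| H_br a b : in_H a -> in_H b -> in_H (kW_br a b).

Inductive in_H' : kW -> Prop :=
| H'_br a b : in_H a -> in_H b -> in_H' (kW_br a b)
| H'_zero : in_H' [ffun => 0]
| H'_add a b : in_H' a -> in_H' b -> in_H' [ffun g => a g + b g]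
| H'_scale (c : F) a : in_H' a -> in_H' [ffun g => c * a g].

Definition rho_alg (a : kW) : 'M[F]_d := \sum_(w in W) a w *: rho w.

End Defs.

(* Main.v *)
Require Import Defs.
From Stdlib Require Import Lia.
From HB Require Import structures.
From mathcomp Require Import all_boot all_order all_algebra all_fingroup all_solvable all_field all_character.
Set Implicit Arguments. Unset Strict Implicit. Unset Printing Implicit Defensive.
Import Order.TTheory GRing.Theory Num.Theory.
Local Open Scope ring_scope.

Section Lin.
Variable F : fieldType.
Hypothesis two : (2%:R : F) != 0.

Lemma invol_split n (A : 'M[F]_n) : A *m A = 1%:M ->
  exists k k' (E : 'M_(k,n)) (G : 'M_(k',n)),
   [/\ (k + k')%N = n, row_free E && row_free G, E *m A = E, G *m A = - G
     & (1%:M <= col_mx E G)%MS].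
Proof.
move=> AA0; have AA : A *m A = 1%:M by [].
set K1 := kermx (A - 1%:M); set K2 := kermx (A + 1%:M).
have sum1 : (1%:M <= K1 + K2)%MS.
  rewrite (_ : 1%:M = 2%:R^-1 *: (1%:M + A) + 2%:R^-1 *: (1%:M - A)); last first.
    rewrite -scalerDr addrCA addrK -mulr2n -scaler_nat scalerA mulVf //.
    by rewrite scale1r.
  apply: addmx_sub_adds; apply: scalemx_sub; rewrite sub_kermx.
    rewrite mulmxDl mulmxBr mul1mx mulmx1 mulmxBr mulmx1. by rewrite AA addrA subrK subrr.
  by rewrite mulmxBl !mulmxDr !mul1mx !mulmx1 AA [1%:M + _]addrC subrr.
exists (\rank K1), (\rank K2), (row_base K1), (row_base K2); split.
- have := mxrank_sum_cap K1 K2.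
  have -> : \rank (K1 :&: K2)%MS = 0%N.
    apply/eqP; rewrite mxrank_eq0; set C := (K1 :&: K2)%MS.
    have h1 : C *m (A - 1%:M) = 0 by apply/eqP; rewrite -sub_kermx capmxSl.
    have h2 : C *m (A + 1%:M) = 0 by apply/eqP; rewrite -sub_kermx capmxSr.
    have : C *m (A + 1%:M) - C *m (A - 1%:M) = 2%:R *: C.
      by rewrite -mulmxBr opprB addrC addrA subrK mulmxDr mulmx1 scaler_nat mulr2n.
    by rewrite h1 h2 subrr => /esym/eqP; rewrite scaler_eq0 (negPf two).
  rewrite addn0 => <-; apply/eqP; rewrite eqn_leq rank_leq_col /=.
  by rewrite -{1}(mxrank1 F n) mxrankS.
- by rewrite !row_base_free.
- have : (row_base K1 <= K1)%MS by rewrite eq_row_base.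
  by rewrite sub_kermx mulmxBr mulmx1 subr_eq0 => /eqP.
- have : (row_base K2 <= K2)%MS by rewrite eq_row_base.
  by rewrite sub_kermx mulmxDr mulmx1 addr_eq0 => /eqP.
by rewrite -addsmxE (adds_eqmx (eq_row_base _) (eq_row_base _)).
Qed.

Lemma invol_rank1_det n (A : 'M[F]_n) : A *m A = 1%:M ->
  \rank (A - 1%:M) = 1%N -> \det A = -1.
Proof.
move=> AA0 r1; have AA : A *m A = 1%:M by [].
have [k [k' [E [G [hn /andP[fE fG] hE hG h1]]]]] := invol_split AA.
subst n.
set Q := col_mx E G.
have Qu : Q \in unitmx by rewrite -row_full_unit -sub1mx.
have QA : Q *m A = block_mx 1%:M 0 0 (- 1%:M) *m Q.
  by rewrite mul_col_mx hE hG mul_block_col !mul1mx !mul0mx addr0 add0r mulNmx mul1mx.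
have rk : k' = 1%N.
  rewrite -r1 -(eqmxMfull _ (_ : row_full Q)); last by rewrite row_full_unit.
  rewrite mul_col_mx !mulmxBr !mulmx1 hE hG subrr rank_col_0mx.
  rewrite -opprD eqmx_opp -mulr2n -scaler_nat eqmx_scale //.
  by move/eqP: fG.
subst k'.
have : \det Q * \det A = \det (block_mx 1%:M 0 0 (- 1%:M) : 'M_(k + 1)) * \det Q.
  by rewrite -!det_mulmx QA.
rewrite det_ublock det1 mul1r -scaleN1r.
rewrite (_ : - 1 *: 1%:M = (-1)%:M); last by rewrite scalemx1.
rewrite det_scalar expr1 mulrC => /mulIf; apply.
by rewrite -unitfE -unitmxE.
Qed.

Lemma neg_self0 p q (X : 'M[F]_(p,q)) : X = - X -> X = 0.
Proof.
move=> hX; have : 2%:R *: X = 0 by rewrite scaler_nat mulr2n {2}hX subrr.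
by move/eqP; rewrite scaler_eq0 (negPf two) => /eqP.
Qed.

Lemma hyp_core d (B u : 'M[F]_d) : u *m u = 1%:M -> u *m B *m u^T = - B ->
  B^T = B -> B \in unitmx -> hyperbolic B.
Proof.
move=> uu0 uBu0 Bs Bu.
have uu : u *m u = 1%:M by []. have uBu : u *m B *m u^T = - B by [].
have [k [k' [E [G [hn /andP[fE fG] hE hG h1]]]]] := invol_split uu.
have conj p q (X : 'M_(p,d)) (Y : 'M_(q,d)) :
    (X *m u) *m B *m (Y *m u)^T = - (X *m B *m Y^T).
  rewrite trmx_mul !mulmxA -(mulmxA X u B) -(mulmxA X (u *m B) u^T) uBu.
  by rewrite mulmxN mulNmx.
have EE : E *m B *m E^T = 0.
  by apply: neg_self0; rewrite -conj hE.
have GG : G *m B *m G^T = 0.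
  by apply: neg_self0; rewrite -conj hG mulNmx raddfN /= mulNmx mulmxN opprK.
subst d.
set Q := col_mx E G.
have Qu : Q \in unitmx by rewrite -row_full_unit -sub1mx.
set M := E *m B *m G^T.
have GE : G *m B *m E^T = M^T by rewrite /M !trmx_mul trmxK Bs mulmxA.
have QBQ : Q *m B *m Q^T = block_mx 0 M M^T 0.
  by rewrite /Q tr_col_mx mul_col_mx mul_col_row EE GG GE.
have rk : (k + k' <= \rank M + \rank M)%N.
  have : \rank (Q *m B *m Q^T) = (k + k')%N.
    by apply: mxrank_unit; rewrite !unitmx_mul Qu Bu unitmx_tr Qu.
  rewrite QBQ => <-.
  rewrite -[block_mx _ _ _ _]/(col_mx (row_mx 0 M) (row_mx M^T 0)).
  rewrite -addsmxE; apply: leq_trans (mxrank_adds_leqif _ _) _.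
  apply: leq_add.
    rewrite (_ : row_mx 0 M = M *m row_mx 0 1%:M); last by rewrite mul_mx_row mulmx0 mulmx1.
    exact: mxrankM_maxl.
  rewrite (_ : row_mx M^T 0 = M^T *m row_mx 1%:M 0); last by rewrite mul_mx_row mulmx0 mulmx1.
  by apply: leq_trans (mxrankM_maxl _ _) _; rewrite mxrank_tr.
have r1 := rank_leq_row M; have r2 := rank_leq_col M.
have hk : k' = k.
  apply/eqP; rewrite eqn_leq; apply/andP; split.
    by rewrite -(leq_add2l k); apply: leq_trans rk _; apply: leq_add.
  by rewrite -(leq_add2r k'); apply: leq_trans rk _; apply: leq_add.
subst k'.
have Mu : M \in unitmx.
  rewrite -row_free_unit /row_free eqn_leq r1 /=.
  move/ssrnat.leP: rk => rk; apply/ssrnat.leP; rewrite -?plusE in rk; lia.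
set N := (invmx M)^T; set F' := N *m G.
set P := col_mx E F'.
have Pu : P \in unitmx.
  have -> : P = block_mx 1%:M 0 0 N *m Q.
    by rewrite /P /Q mul_block_col !mul1mx !mul0mx addr0 add0r.
  rewrite unitmx_mul Qu andbT unitmxE det_ublock det1 mul1r -unitmxE.
  by rewrite unitmx_tr unitmx_inv.
have PBP : P *m B *m P^T = block_mx 0 1%:M 1%:M 0.
  rewrite /P /F' tr_col_mx mul_col_mx mul_col_row EE trmx_mul /N trmxK.
  rewrite !mulmxA -/M mulmxV // -(mulmxA _ G B) -(mulmxA _ (G *m B) E^T) -(mulmxA _ (G *m B) G^T) GE GG mulmx0 mul0mx.
  by rewrite -trmx_mul mulmxV // trmx1.
exists k; split => //; exists P; split => //.
rewrite PBP; apply/matrixP => i j.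
case: (split_ordP i) => i' ->; case: (split_ordP j) => j' ->.
all: rewrite ?block_mxEul ?block_mxEur ?block_mxEdl ?block_mxEdr !mxE /=.
all: clear -i' j'; case: i' j' => [a Ha] [b Hb] /=; move/ssrnat.ltP: (Ha) => ?; move/ssrnat.ltP: (Hb) => ?.
all: rewrite -?val_eqE /=; repeat (case: eqP => ?); try by [].
all: exfalso; repeat match goal with H : context [addn _ _] |- _ => move: H end; rewrite -?plusE; intros; lia.
Qed.

Lemma inv_from_iso d (R P : 'M[F]_d) (e h : F) : R \in unitmx -> P \in unitmx ->
  h * h = 1 -> (e *: (invmx R)^T) *m P = P *m (h *: R) ->
  R *m invmx P *m R^T = (e * h) *: invmx P.
Proof.
move=> Ru Pu hh H.
have := congr1 (fun X => invmx P *m X *m invmx P) H => /=.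
rewrite !mulmxA mulVmx // mul1mx mulmxK // -scalemxAr -scalemxAl.
move=> H2.
have := congr1 (fun X => h *: (X *m R^T)) H2 => /=.
rewrite -!scalemxAl !scalerA hh scale1r -(mulmxA (invmx P)) -trmx_mul mulmxV // trmx1 mulmx1 mulrC; by move=> ->.
Qed.

Lemma intertw d (R B B0 : 'M[F]_d) c : R \in unitmx -> B0 \in unitmx -> c != 0 ->
  R *m B0 *m R^T = c *: B0 -> R *m B *m R^T = c *: B ->
  R *m (B *m invmx B0) = (B *m invmx B0) *m R.
Proof.
move=> Ru B0u c0 h0 h.
have RB0u : R *m B0 \in unitmx by rewrite unitmx_mul Ru B0u.
have hRT : R^T = c *: (invmx B0 *m invmx R *m B0).
  apply: (can_inj (mulKmx RB0u)); rewrite h0 -scalemxAr !mulmxA.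
  by rewrite -(mulmxA R B0) mulmxV // mulmx1 mulmxV // mul1mx.
have : R *m B *m invmx B0 *m invmx R *m B0 = B.
  apply: (scalerI c0); rewrite -h hRT -scalemxAr !mulmxA.
  done.
move=> e; rewrite mulmxA.
have := congr1 (fun X => X *m invmx B0 *m R) e => /=.
rewrite -(mulmxA _ B0) mulmxV // mulmx1 -(mulmxA _ (invmx R)) mulVmx //.
by rewrite mulmx1.
Qed.

Definition lie d (B u : 'M[F]_d) := u *m B + B *m u^T = 0.

Lemma lie0 d (B : 'M[F]_d) : lie B 0.
Proof. by rewrite /lie mul0mx trmx0 mulmx0 addr0. Qed.

Lemma lieD d (B u v : 'M[F]_d) : lie B u -> lie B v -> lie B (u + v).
Proof.
rewrite /lie => hu hv; rewrite mulmxDl raddfD /= mulmxDr.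
by rewrite addrACA hu hv addr0.
Qed.

Lemma lieZ d (B u : 'M[F]_d) c : lie B u -> lie B (c *: u).
Proof.
by rewrite /lie => hu; rewrite linearZ /= -scalemxAl -scalemxAr -scalerDr hu scaler0.
Qed.

Lemma lie_comm d (B u v : 'M[F]_d) : lie B u -> lie B v -> lie B (u *m v - v *m u).
Proof.
rewrite /lie => hu hv.
have hu' : u *m B = - (B *m u^T) by apply/eqP; rewrite -addr_eq0 hu.
have hv' : v *m B = - (B *m v^T) by apply/eqP; rewrite -addr_eq0 hv.
rewrite mulmxBl raddfB /= mulmxBr !trmx_mul -!mulmxA hv' hu'.
rewrite !mulmxN !mulmxA hu' hv' !mulNmx !opprK.
by rewrite -[B *m v^T *m u^T - _]opprB subrr.
Qed.

Lemma comm_shift d (u v : 'M[F]_d) a b :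
  (u + a%:M) *m (v + b%:M) - (v + b%:M) *m (u + a%:M) = u *m v - v *m u.
Proof.
rewrite mulmxDl (mulmxDr (v + b%:M)) (scalar_mxC a (v + b%:M)) opprD addrACA subrr addr0.
by rewrite mulmxDr mulmxDl (scalar_mxC b u) opprD addrACA subrr addr0.
Qed.
End Lin.
Lemma N1ne1 (R : fieldType) : (2%:R : R) != 0 -> (-1 : R) != 1.
Proof.
move=> two; apply: contra two => /eqP e.
by rewrite mulr2n -{1}e addNr.
Qed.

Section Main.
Variables (gT : finGroupType) (W : {group gT}) (n : nat)
  (rV : mx_representation algC W n) (F : fieldType) (d : nat)
  (rho : mx_representation F W d).

Lemma refl_props s : s \in reflections rV ->
  [/\ s \in W, (s * s = 1)%g & sgn_char rV F s = -1].
Proof.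
rewrite inE /is_reflection => /and3P[sW /eqP o2 /eqP r1].
have ss : (s * s = 1)%g by rewrite -expg2 -o2 expg_order.
split => //.
have two : (2%:R : algC) != 0 by rewrite pnatr_eq0.
rewrite /sgn_char (invol_rank1_det two) //; last first.
  by rewrite -repr_mxM // ss repr_mx1.
by rewrite (negPf (N1ne1 two)).
Qed.

Lemma gen_in (P : pred gT) : is_reflection_group rV -> P 1%g ->
  {in W &, forall x y, P x -> P y -> P (x * y)%g} ->
  {in reflections rV, forall s, P s} -> {in W, forall x, P x}.
Proof.
move=> [_ gW] P1 PM PR.
have gS : group_set [set x in W | P x].
  apply/group_setP; split; first by rewrite inE group1 P1.
  move=> x y; rewrite !inE => /andP[xW Px] /andP[yW Py].
  by rewrite groupM // PM.
have sub : (<<reflections rV>> \subset Group gS)%g.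
  rewrite gen_subG; apply/subsetP => s Rs; rewrite inE.
  have [sW _ _] := refl_props Rs.
  by rewrite sW PR.
move=> x; rewrite gW => xR; have := subsetP sub x xR.
by rewrite inE => /andP[].
Qed.

Lemma rho_alg_add (a b : kW gT F) :
  rho_alg rho [ffun g => a g + b g] = rho_alg rho a + rho_alg rho b.
Proof.
by rewrite /rho_alg -big_split; apply: eq_bigr => w _; rewrite ffunE scalerDl.
Qed.

Lemma rho_alg_sub (a b : kW gT F) :
  rho_alg rho [ffun g => a g - b g] = rho_alg rho a - rho_alg rho b.
Proof.
rewrite /rho_alg -sumrB; apply: eq_bigr => w _.
by rewrite ffunE scalerBl.
Qed.

Lemma rho_alg_scale c (a : kW gT F) :
  rho_alg rho [ffun g => c * a g] = c *: rho_alg rho a.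
Proof.
by rewrite /rho_alg scaler_sumr; apply: eq_bigr => w _; rewrite ffunE scalerA.
Qed.

Lemma rho_alg0 : rho_alg rho [ffun => 0] = 0.
Proof. by rewrite /rho_alg big1 // => w _; rewrite ffunE scale0r. Qed.

Lemma rho_alg_of s : s \in W -> rho_alg rho (kW_of F s) = rho s.
Proof.
move=> sW; rewrite /rho_alg (bigD1 s) //= big1 ?ffunE ?eqxx ?scale1r ?addr0 //.
by move=> w /andP[_ ne]; rewrite ffunE (negPf ne) scale0r.
Qed.

Lemma rho_alg_mul (a b : kW gT F) :
  rho_alg rho (kW_mul W a b) = rho_alg rho a *m rho_alg rho b.
Proof.
rewrite /rho_alg mulmx_suml.
under eq_bigr do rewrite ffunE scaler_suml.
rewrite exchange_big /=; apply: eq_bigr => x xW.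
rewrite mulmx_sumr (reindex_inj (mulgI x)) /=.
rewrite (eq_bigl (fun y => y \in W)) => [|y]; last by rewrite groupMl.
apply: eq_bigr => y yW.
by rewrite mulKg repr_mxM // -scalemxAl -scalemxAr scalerA.
Qed.

Lemma rho_alg_br (a b : kW gT F) :
  rho_alg rho (kW_br W a b) =
  rho_alg rho a *m rho_alg rho b - rho_alg rho b *m rho_alg rho a.
Proof. by rewrite /kW_br rho_alg_sub !rho_alg_mul. Qed.

End Main.

Unset Implicit Arguments.
Set Strict Implicit.

Theorem proposition2p3 (gT : finGroupType) (W : {group gT}) (n : nat)
  (rV : mx_representation algC W n) (F : fieldType) (d : nat)
  (rho : mx_representation F W d) :
  is_reflection_group rV ->
  [pchar F] =i pred0 ->
  group_splitting_field F W ->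
  mx_irreducible rho ->
  forall eta : gT -> F,
    in_X rV rho eta -> dual_twist_iso rV rho eta ->
    (forall eta' : gT -> F,
       in_X rV rho eta' -> dual_twist_iso rV rho eta' -> {in W, eta' =1 eta})
    /\
    exists B0 : 'M[F]_d,
      [/\ B0 \in unitmx,
          invariant_form rV rho eta B0,
          (forall B : 'M[F]_d, invariant_form rV rho eta B ->
             exists c : F, B = c *: B0),
          (forall a, in_H' rV a -> in_osp B0 (rho_alg rho a)) &
          (B0^T = B0 -> (1 < d)%N -> hyperbolic B0)].
Proof.
move=> RG ch0 split irr eta [[etaM etaV] etaX] [P [Pu HP]].
have two : (2%:R : F) != 0 by rewrite ((pcharf0P F).1 ch0 2).
have n1 := N1ne1 two.
have d0 : (0 < d)%N.
  case: irr => _ nz _; by rewrite lt0n -(mxrank1 F d) mxrank_eq0.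
have sgn2 w : sgn_char rV F w * sgn_char rV F w = 1.
  by rewrite /sgn_char; case: ifP; rewrite ?mulr1 ?mulrNN ?mulr1.
have eta2 w : w \in W -> eta w * eta w = 1.
  by move=> wW; case: (etaV w wW) => ->; rewrite ?mulr1 ?mulrNN ?mulr1.
have scal e : dual_twist_iso rV rho e -> forall s, s \in reflections rV ->
    (rho s = 1%:M \/ rho s = - 1%:M) -> e s = -1.
  move=> [Q [Qu HQ]] s Rs hs; have [sW ss sg] := refl_props F Rs.
  have := HQ s sW.
  have -> : (s^-1 = s)%g by apply/eqP; rewrite eq_invg_mul ss.
  have [c [c0 ->]] : exists c, c != 0 /\ rho s = c%:M.
    case: hs => ->; first by exists 1; rewrite oner_neq0.
    by exists (-1); rewrite oppr_eq0 oner_neq0 -scaleN1r scalemx1.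
  rewrite tr_scalar_mx sg -scalemxAl mul_scalar_mx -scalemxAr mul_mx_scalar.
  rewrite !scalerA => /eqP; rewrite -subr_eq0 -scalerBl scaler_eq0.
  have Q0 : Q != 0 by rewrite -mxrank_eq0 (mxrank_unit Qu) -lt0n.
  rewrite (negPf Q0) orbF subr_eq0 mulN1r => /eqP e1.
  by apply: (mulIf c0); rewrite -e1 mulN1r.
split.
  move=> eta' [[eM' eV'] eX'] iso'.
  have e1 (e : gT -> F) : {in W &, forall x y, e (x * y)%g = e x * e y} ->
      {in W, forall x, e x = 1 \/ e x = -1} -> e 1%g = 1.
    move=> eM eV; have := eM 1%g 1%g (group1 W) (group1 W); rewrite mulg1.
    case: (eV 1%g (group1 W)) => -> // h; exfalso; move: h.
    by rewrite mulrNN mulr1 => /eqP; rewrite (negPf n1).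
  move=> x0 xW; apply/eqP; apply: (@gen_in _ _ _ rV F (fun x => eta' x == eta x) RG) xW.
  - by rewrite (e1 _ eM' eV') (e1 _ etaM etaV).
  - by move=> x y xW yW /eqP hx /eqP hy; rewrite eM' // etaM // hx hy.
  move=> s Rs; have [sW _ _] := refl_props F Rs.
  case: (eV' s sW) => h'; case: (etaV s sW) => h; rewrite h h' //.
    by move: h'; rewrite (scal _ iso' _ Rs (etaX s Rs h)) => /eqP; rewrite (negPf n1).
  by move: h; rewrite (scal _ (ex_intro _ P (conj Pu HP)) _ Rs (eX' s Rs h')) => /eqP; rewrite (negPf n1).
exists (invmx P).
have inv : invariant_form rV rho eta (invmx P).
  move=> w wW; apply: inv_from_iso; rewrite ?repr_mx_unit ?eta2 //.
  by rewrite -repr_mxV //; apply: HP.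
split => //.
- by rewrite unitmx_inv.
- move=> B hB.
  have abs := split _ rho irr.
  have: is_scalar_mx (B *m invmx (invmx P)).
    apply: (mx_abs_irr_cent_scalar abs); apply/centgmxP => w wW.
    have c0 : sgn_char rV F w * eta w != 0.
      apply/eqP => h0; have := congr1 (fun x => x * x) h0.
      by rewrite /= mulrACA sgn2 eta2 // mul0r mulr1 => /eqP; rewrite oner_eq0.
    symmetry; apply: (intertw (repr_mx_unit rho wW) _ c0 (inv w wW) (hB w wW)).
    by rewrite unitmx_inv.
  case/is_scalar_mxP => a ha; exists a.
  by rewrite -mul_scalar_mx -ha mulmxKV // unitmx_inv.
- have sc0 : (0 : F)%:M = 0 :> 'M_d by rewrite -scalemx1 scale0r.
  have Rrefl s : s \in reflections rV -> exists c, lie (invmx P) (rho s - c%:M).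
    move=> Rs; have [sW ss sg] := refl_props F Rs.
    case: (etaV s sW) => h.
      exists 0; rewrite sc0 subr0 /lie.
      have huBu := inv s sW; rewrite sg h mulr1 scaleN1r in huBu.
      have uu : rho s *m rho s = 1%:M by rewrite -repr_mxM // ss repr_mx1.
      have -> : rho s *m invmx P = rho s *m invmx P *m ((rho s)^T *m (rho s)^T).
        by rewrite -trmx_mul uu trmx1 mulmx1.
      by rewrite mulmxA huBu mulNmx addNr.
    case: (etaX s Rs h) => ->; first by exists 1; rewrite subrr; apply: lie0.
    by exists (-1); rewrite -scaleN1r scalemx1 subrr; apply: lie0.
  have HH a : in_H rV a -> exists c, lie (invmx P) (rho_alg rho a - c%:M).
    elim => [s Rs | | a1 a2 _ [c1 h1] _ [c2 h2] | c a1 _ [c1 h1] | a1 a2 _ [c1 h1] _ [c2 h2]].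
    + have [sW _ _] := refl_props F Rs; rewrite rho_alg_of //; exact: Rrefl.
    + by exists 0; rewrite rho_alg0 sc0 subrr; apply: lie0.
    + exists (c1 + c2); rewrite rho_alg_add raddfD /= opprD addrACA; exact: lieD.
    + exists (c * c1); rewrite rho_alg_scale -scale_scalar_mx -scalerBr; exact: lieZ.
    + exists 0; rewrite rho_alg_br sc0 subr0.
      rewrite -(subrK (c1%:M) (rho_alg rho a1)) -(subrK (c2%:M) (rho_alg rho a2)) comm_shift.
      exact: lie_comm.
  move=> a; elim => [a1 a2 ha1 ha2 | | a1 a2 _ [t1 l1] _ [t2 l2] | c a1 _ [t1 l1]]; rewrite /in_osp.
  + have [c1 h1] := HH _ ha1; have [c2 h2] := HH _ ha2.
    rewrite rho_alg_br; split; first by rewrite linearB /= mxtrace_mulC subrr.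
    rewrite -(subrK (c1%:M) (rho_alg rho a1)) -(subrK (c2%:M) (rho_alg rho a2)) comm_shift.
    exact: lie_comm.
  + by rewrite rho_alg0 mxtrace0; split => //; apply: lie0.
  + by rewrite rho_alg_add mxtraceD t1 t2 addr0; split => //; apply: lieD.
  + by rewrite rho_alg_scale mxtraceZ t1 mulr0; split => //; apply: lieZ.
move=> Bs d1.
case: (boolP [exists s in reflections rV, eta s == 1]).
  case/exists_inP => s Rs /eqP h; have [sW ss sg] := refl_props F Rs.
  apply: (@hyp_core _ two _ (invmx P) (rho s)) => //.
  - by rewrite -repr_mxM // ss repr_mx1.
  - by rewrite (inv s sW) sg h mulr1 scaleN1r.
  - by rewrite unitmx_inv.
rewrite negb_exists_in => /forall_inP hno.
have scal_all : {in W, forall w, is_scalar_mx (rho w)}.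
  apply: (@gen_in _ _ _ rV F (fun w => is_scalar_mx (rho w)) RG).
  - by rewrite /= repr_mx1 scalar_mx_is_scalar.
  - move=> x y xW yW /=; rewrite repr_mxM //.
    by case/is_scalar_mxP => a ->; case/is_scalar_mxP => b ->; rewrite -scalar_mxM scalar_mx_is_scalar.
  move=> s Rs; have [sW _ _] := refl_props F Rs.
  have := hno s Rs; case: (etaV s sW) => h; rewrite h ?eqxx // => _.
  case: (etaX s Rs h) => -> /=; first exact: scalar_mx_is_scalar.
  by rewrite -scaleN1r scalemx1 scalar_mx_is_scalar.
case: irr => _ _ simple.
pose V : 'M[F]_d := pid_mx 1.
have modV : mxmodule rho V.
  apply/mxmoduleP => w wW; have := scal_all w wW; case/is_scalar_mxP => a ->.
  by rewrite mul_mx_scalar scalemx_sub.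
have nzV : V != 0 by rewrite -mxrank_eq0 rank_pid_mx.
have := simple _ modV (submx1 V) nzV => /mxrankS.
by rewrite mxrank1 rank_pid_mx // => h; rewrite ltnNge h in d1.
Qed.
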